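(* Let $L$ be an invariant intrinsic location functional and $\mathbf X$ a periodic stationary process with period $1$. Then $L(\mathbf X,[0,1])$ is uniformly distributed on $[0,1]$; in particular its density on $(0,1)$ equals $1$.
   Context: Let $H$ be a set of functions $\mathbb R\to\mathbb R$ with period $1$, invariant under shifts ($\theta_cg(x)=g(x+c)$), with the cylindrical $\sigma$-field; $\mathcal I$ is the set of compact intervals $[a,b]$, $a<b$. An intrinsic location functional is a map $L:H\times\mathcal I\to\mathbb R\cup\{\infty\}$ such that: (i) $L(\cdot,I)$ is measurable; (ii) $L(g,I)\in I\cup\{\infty\}$; (iii) $L(g,I)=L(\theta_cg,I-c)+c$ (with $\infty+c=\infty$); (iv) if $I_2\subseteq I_1$ and $L(g,I_1)\in I_2$ then $L(g,I_2)=L(g,I_1)$; (v) if $I_2\subseteq I_1$ and $L(g,I_2)\ne\infty$ then $L(g,I_1)\neq\infty$. It is called invariant if moreover $L(g,I)\ne\infty$ for all $g\in H$, $I\in\mathcal I$, and $L(g,[0,1])=L(g,[a,a+1])\pmod 1$ for all $a\in\mathbb R$, $g\in H$. A periodic stationary process with period $1$ is a stationary process with continuous sample paths of period $1$ lying in $H$. *)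

(* Defs.v *)
From Stdlib Require Import Reals Lra.
Open Scope R_scope.

Definition sigma_algebra {T : Type} (S : (T -> Prop) -> Prop) : Prop :=
  S (fun _ => True) /\
  (forall A, S A -> S (fun x => ~ A x)) /\
  (forall A : nat -> T -> Prop, (forall n, S (A n)) -> S (fun x => exists n, A n x)).

Definition generated {T : Type} (G : (T -> Prop) -> Prop) : (T -> Prop) -> Prop :=
  fun A => forall S, sigma_algebra S -> (forall B, G B -> S B) -> S A.

Definition borel : (R -> Prop) -> Prop :=
  generated (fun B => exists a b : R, forall x, B x <-> (a < x <= b)).

Definition cylindrical : ((R -> R) -> Prop) -> Prop :=
  generated (fun A => exists (t : R) (B : R -> Prop),
                borel B /\ forall g, A g <-> B (g t)).

Definition trace_meas (H : (R -> R) -> Prop) (E : (R -> R) -> Prop) : Prop :=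
  exists A, cylindrical A /\ forall g, H g -> (E g <-> A g).

Definition probability {Om : Type} (F : (Om -> Prop) -> Prop) (P : (Om -> Prop) -> R) : Prop :=
  P (fun _ => True) = 1 /\
  (forall A, F A -> 0 <= P A) /\
  (forall A : nat -> Om -> Prop,
      (forall n, F (A n)) ->
      (forall n m x, n <> m -> A n x -> A m x -> False) ->
      infinite_sum (fun n => P (A n)) (P (fun x => exists n, A n x))).

Definition shift (c : R) (g : R -> R) : R -> R := fun x => g (x + c).

Definition periodic1 (g : R -> R) : Prop := forall x, g (x + 1) = g x.

Definition periodic_shift_space (H : (R -> R) -> Prop) : Prop :=
  (forall g, H g -> periodic1 g) /\ (forall g c, H g -> H (shift c g)).

(** * Intrinsic location functionals.
    A compact interval [a,b] (a<b) is given by its endpoints; the value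
    [None] encodes infinity. *)

Definition intrinsic_location (H : (R -> R) -> Prop)
    (L : (R -> R) -> R -> R -> option R) : Prop :=
  (forall a b, a < b ->
     (forall B, borel B -> trace_meas H (fun g => exists y, L g a b = Some y /\ B y)) /\
     trace_meas H (fun g => L g a b = None)) /\
  (forall g a b y, H g -> a < b -> L g a b = Some y -> a <= y <= b) /\
  (forall g a b c, H g -> a < b ->
     L g a b = option_map (fun y => y + c) (L (shift c g) (a - c) (b - c))) /\
  (forall g a1 b1 a2 b2 y, H g -> a1 < b1 -> a2 < b2 -> a1 <= a2 -> b2 <= b1 ->
     L g a1 b1 = Some y -> a2 <= y <= b2 -> L g a2 b2 = Some y) /\
  (forall g a1 b1 a2 b2, H g -> a1 < b1 -> a2 < b2 -> a1 <= a2 -> b2 <= b1 ->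
     L g a2 b2 <> None -> L g a1 b1 <> None).

Definition invariant_intrinsic_location (H : (R -> R) -> Prop)
    (L : (R -> R) -> R -> R -> option R) : Prop :=
  intrinsic_location H L /\
  (forall g a b, H g -> a < b -> L g a b <> None) /\
  (forall g a, H g -> exists (y0 ya : R) (k : Z),
      L g 0 1 = Some y0 /\ L g a (a + 1) = Some ya /\ y0 = ya + IZR k).

Definition periodic_stationary_process {Om : Type} (H : (R -> R) -> Prop)
    (F : (Om -> Prop) -> Prop) (P : (Om -> Prop) -> R) (X : Om -> R -> R) : Prop :=
  (forall w, H (X w)) /\
  (forall w, continuity (X w)) /\
  (forall w, periodic1 (X w)) /\
  (forall A, cylindrical A -> F (fun w => A (X w))) /\
  (forall c A, cylindrical A -> P (fun w => A (shift c (X w))) = P (fun w => A (X w))).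

(* Main.v *)
Require Import Defs.
From Stdlib Require Import Reals Lra Lia ZArith Classical FunctionalExtensionality PropExtensionality.
Open Scope R_scope.

Lemma P_ext {Om : Type} (P : (Om -> Prop) -> R) (A B : Om -> Prop) :
  (forall w, A w <-> B w) -> P A = P B.
Proof. intro h. f_equal. apply functional_extensionality; intro w;
  apply propositional_extensionality; auto. Qed.

Lemma S_ext {Om : Type} (S : (Om -> Prop) -> Prop) (A B : Om -> Prop) :
  S A -> (forall w, A w <-> B w) -> S B.
Proof. intros hA h. replace B with A; auto. apply functional_extensionality; intro w;
  apply propositional_extensionality; auto. Qed.

Lemma S_union2 {Om : Type} (S : (Om -> Prop) -> Prop) (A B : Om -> Prop) :
  sigma_algebra S -> S A -> S B -> S (fun w => A w \/ B w).
Proof.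
  intros [hT [hC hU]] hA hB.
  set (f := fun n : nat => match n with 0%nat => A | _ => B end).
  apply (S_ext S (fun x => exists n, f n x)).
  - apply hU. intros [|n]; simpl; auto.
  - intro w; split.
    + intros [[|n] h]; simpl in h; auto.
    + intros [h|h]; [exists 0%nat | exists 1%nat]; simpl; auto.
Qed.

Lemma S_empty {Om : Type} (S : (Om -> Prop) -> Prop) :
  sigma_algebra S -> S (fun _ => False).
Proof. intros [hT [hC hU]]. apply (S_ext S (fun x => ~ True)); auto. intro; tauto. Qed.

Lemma S_diff {Om : Type} (S : (Om -> Prop) -> Prop) (A B : Om -> Prop) :
  sigma_algebra S -> S A -> S B -> S (fun w => B w /\ ~ A w).
Proof.
  intros hS hA hB. pose proof hS as [hT [hC hU]].
  apply (S_ext S (fun w => ~ (~ B w \/ A w))).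
  - apply hC. apply S_union2; auto.
  - intro w; split.
    + intro h; split; [apply NNPP; tauto | tauto].
    + tauto.
Qed.

Lemma sum_two (f : nat -> R) n : (1 <= n)%nat -> (forall m, (2 <= m)%nat -> f m = 0) ->
  sum_f_R0 f n = f 0%nat + f 1%nat.
Proof.
  intros hn h. induction n as [|n IH]; [lia|].
  destruct n as [|n]; [simpl; ring|].
  simpl sum_f_R0. simpl in IH. rewrite IH by lia. rewrite (h (S (S n))) by lia. ring.
Qed.

Lemma P_empty {Om : Type} F (P : (Om -> Prop) -> R) :
  sigma_algebra F -> probability F P -> P (fun _ => False) = 0.
Proof.
  intros hF [h1 [h0 hadd]].
  set (p := P (fun _ => False)).
  assert (hs : infinite_sum (fun _ : nat => p) p).
  { unfold p at 2. rewrite (P_ext P (fun _ => False) (fun x => exists n : nat, False)).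
    - apply (hadd (fun _ => fun _ => False)); auto. intro; apply S_empty; auto.
    - intro w; split; [tauto | intros [_ f]; exact f]. }
  assert (hsum : forall n, sum_f_R0 (fun _ => p) n = (INR n + 1) * p).
  { induction n; simpl; [ring|]. rewrite IHn. destruct n; simpl; ring. }
  destruct (Req_dec p 0) as [e|ne]; auto. exfalso.
  destruct (hs (Rabs p)) as [N hN]. { apply Rabs_pos_lt; auto. }
  specialize (hN (S N) ltac:(lia)). rewrite hsum in hN. unfold R_dist in hN.
  replace ((INR (S N) + 1) * p - p) with (INR (S N) * p) in hN by ring.
  rewrite Rabs_mult, Rabs_right in hN by (apply Rle_ge, pos_INR).
  rewrite S_INR in hN. pose proof (pos_INR N). pose proof (Rabs_pos p). nra.
Qed.

Lemma P_add2 {Om : Type} F (P : (Om -> Prop) -> R) (A B : Om -> Prop) :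
  sigma_algebra F -> probability F P -> F A -> F B ->
  (forall w, A w -> B w -> False) -> P (fun w => A w \/ B w) = P A + P B.
Proof.
  intros hF hP hA hB hd. pose proof (P_empty F P hF hP) as he.
  destruct hP as [h1 [h0 hadd]].
  set (f := fun n : nat => match n with 0%nat => A | 1%nat => B | _ => fun _ => False end).
  assert (hs : infinite_sum (fun n => P (f n)) (P (fun x => exists n, f n x))).
  { apply hadd.
    - intros [|[|n]]; simpl; auto. apply S_empty; auto.
    - intros [|[|n]] [|[|m]] x hnm; simpl; try tauto; intros; eauto. }
  assert (hs2 : infinite_sum (fun n => P (f n)) (P A + P B)).
  { intros eps heps. exists 1%nat. intros n hn. rewrite sum_two; auto.
    - simpl. unfold R_dist. replace (P A + P B - (P A + P B)) with 0 by ring.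
      rewrite Rabs_R0; auto.
    - intros [|[|m]] hm; try lia. simpl; auto. }
  rewrite <- (uniqueness_sum _ _ _ hs hs2). apply P_ext. intro w; split.
  - intros [h|h]; [exists 0%nat | exists 1%nat]; simpl; auto.
  - intros [[|[|n]] h]; simpl in h; tauto.
Qed.

Lemma P_mono {Om : Type} F (P : (Om -> Prop) -> R) (A B : Om -> Prop) :
  sigma_algebra F -> probability F P -> F A -> F B ->
  (forall w, A w -> B w) -> P A <= P B.
Proof.
  intros hF hP hA hB hsub.
  rewrite (P_ext P B (fun w => A w \/ (B w /\ ~ A w))).
  - rewrite (P_add2 F); auto.
    + pose proof hP as [_ [h0 _]]. pose proof (h0 _ (S_diff F A B hF hA hB)). lra.
    + apply S_diff; auto.
    + intros w h1 [_ h2]; auto.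
  - intro w; split; [intro h; destruct (classic (A w)); auto | intros [h|[h _]]; auto].
Qed.

Lemma P_le1 {Om : Type} F (P : (Om -> Prop) -> R) (A : Om -> Prop) :
  sigma_algebra F -> probability F P -> F A -> P A <= 1.
Proof.
  intros hF hP hA. pose proof hP as [h1 _]. rewrite <- h1.
  apply (P_mono F); auto. destruct hF; auto.
Qed.

Lemma borel_Ioc a b : borel (fun y => a < y <= b).
Proof. intros S hS hG. apply hG. exists a, b. tauto. Qed.

Lemma borel_union2 A B : borel A -> borel B -> borel (fun y => A y \/ B y).
Proof. intros hA hB S hS hG. apply S_union2; [exact hS | apply hA | apply hB]; auto. Qed.

Lemma floor_lemma z : 0 < z -> exists k : nat, INR k < z <= INR k + 1.
Proof.
  intro hz. destruct (archimed (- z)) as [h1 h2].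
  set (v := up (- z)) in *.
  assert (hv : (0 <= - v)%Z).
  { assert (IZR (-1) < IZR (- v)) by (rewrite opp_IZR; simpl; lra).
    apply lt_IZR in H. lia. }
  exists (Z.to_nat (- v)). rewrite INR_IZR_INZ, Z2Nat.id by auto. rewrite opp_IZR. lra.
Qed.

Lemma zero_lemma a : 0 <= a -> (forall n : nat, (2 <= n)%nat -> a <= / INR n) -> a = 0.
Proof.
  intros ha h. destruct (Req_dec a 0) as [e|ne]; auto. exfalso.
  assert (hap : 0 < a) by lra.
  destruct (INR_unbounded (/ a)) as [N hN].
  specialize (h (N + 2)%nat ltac:(lia)). rewrite plus_INR in h. simpl INR in h.
  pose proof (pos_INR N).
  assert (hpos : 0 < INR N + (1 + 1)) by lra.
  apply (Rmult_le_compat_r (INR N + (1+1))) in h; [|lra].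
  rewrite Rinv_l in h by lra.
  apply (Rmult_lt_compat_l a) in hN; auto. rewrite Rinv_r in hN by lra. nra.
Qed.

Definition Arc (n k : nat) : R -> Prop := fun y =>
  INR k / INR n < y <= (INR k + 1) / INR n \/ (k = (n - 1)%nat /\ -1 < y <= 0).

Lemma borel_Arc n k : borel (Arc n k).
Proof.
  unfold Arc. destruct (Nat.eq_dec k (n-1)) as [e|ne].
  - apply borel_union2; [apply borel_Ioc|].
    apply (S_ext borel (fun y => -1 < y <= 0)); [apply borel_Ioc|]. intro; tauto.
  - apply (S_ext borel (fun y => INR k / INR n < y <= (INR k + 1) / INR n)); [apply borel_Ioc|].
    intro; tauto.
Qed.

Lemma arc_core c d y z jr : 0 < d -> d <= 1/2 -> 0 <= c -> (c + d = 1 \/ c + 2 * d <= 1) ->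
  0 <= y <= 1 -> 0 <= z <= 1 -> z = y - c + jr -> (jr = -1 \/ jr = 0 \/ jr = 1) ->
  (0 < z <= d <-> (c < y <= c + d \/ (c + d = 1 /\ -1 < y <= 0))).
Proof.
  intros hd hd2 hc hw hy hz hzj hj.
  destruct hw as [hw|hw]; destruct hj as [hj|[hj|hj]]; subst jr; split; intro h; lra.
Qed.

Lemma arc_wrap n k : (2 <= n)%nat -> (k < n)%nat ->
  (k = (n-1)%nat <-> INR k / INR n + / INR n = 1) /\
  (INR k / INR n + / INR n = 1 \/ INR k / INR n + 2 * / INR n <= 1).
Proof.
  intros hn hk. assert (hN : INR n >= 2). { replace 2 with (INR 2) by (simpl; ring). apply Rle_ge, le_INR; lia. }
  destruct (Nat.eq_dec k (n-1)) as [e|ne].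
  - assert (INR k + 1 = INR n). { subst k. rewrite <- S_INR. f_equal. lia. }
    assert (INR k / INR n + / INR n = 1). { field_simplify; [|lra]. rewrite H. field. lra. }
    split; [tauto | auto].
  - assert (INR k + 2 <= INR n). { replace 2 with (INR 2) by (simpl; ring). rewrite <- plus_INR. apply le_INR; lia. }
    assert (INR k / INR n + 2 * / INR n <= 1).
    { replace (INR k / INR n + 2 * / INR n) with ((INR k + 2) / INR n) by (field; lra).
      apply (Rmult_le_reg_r (INR n)); [lra|]. field_simplify; lra. }
    assert (INR k / INR n + / INR n <> 1).
    { pose proof (Rinv_0_lt_compat (INR n) ltac:(lra)). lra. }
    split; [tauto | auto].
Qed.

Lemma arc_rel n k y z j : (2 <= n)%nat -> (k < n)%nat ->
  0 <= y <= 1 -> 0 <= z <= 1 -> z = y - INR k / INR n + IZR j ->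
  (Arc n k y <-> Arc n 0 z).
Proof.
  intros hn hk hy hz hzj.
  assert (hN : INR n >= 2). { replace 2 with (INR 2) by (simpl; ring). apply Rle_ge, le_INR; lia. }
  destruct (arc_wrap n k hn hk) as [hw1 hw2].
  assert (hj : (j = -1 \/ j = 0 \/ j = 1)%Z).
  { assert (0 <= INR k / INR n < 1).
    { split. apply Rmult_le_pos; [apply pos_INR | left; apply Rinv_0_lt_compat; lra].
      pose proof (Rinv_0_lt_compat (INR n) ltac:(lra)). lra. }
    assert (IZR (-2) < IZR j) by (simpl; lra). assert (IZR j < IZR 2) by (simpl; lra).
    apply lt_IZR in H0. apply lt_IZR in H1. lia. }
  assert (hjr : IZR j = -1 \/ IZR j = 0 \/ IZR j = 1).
  { destruct hj as [e|[e|e]]; subst j; simpl; lra. }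
  assert (hd : 0 < / INR n) by (apply Rinv_0_lt_compat; lra).
  assert (hd2 : / INR n <= 1/2).
  { apply (Rmult_le_reg_r (INR n)); [lra|]. rewrite Rinv_l by lra. lra. }
  assert (hc : 0 <= INR k / INR n).
  { apply Rmult_le_pos; [apply pos_INR | lra]. }
  pose proof (arc_core (INR k / INR n) (/ INR n) y z (IZR j) hd hd2 hc hw2 hy hz hzj hjr) as hcore.
  unfold Arc. simpl INR.
  replace ((INR k + 1) / INR n) with (INR k / INR n + / INR n) by (field; lra).
  replace (0 / INR n) with 0 by (field; lra).
  replace ((0 + 1) / INR n) with (/ INR n) by (field; lra).
  assert (h0 : (0%nat = (n-1)%nat) <-> False) by (split; [lia | tauto]).
  rewrite h0. rewrite hw1. split.
  - intro h. left. apply hcore. lra.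
  - intros [h|h]; [apply hcore; auto | lra].
Qed.

Lemma arc_disj n k m y : (k < m)%nat -> (m < n)%nat -> 0 <= y <= 1 ->
  Arc n k y -> Arc n m y -> False.
Proof.
  intros hkm hmn hy hk hm. unfold Arc in *.
  assert (hN : INR n > 0) by (apply lt_0_INR; lia).
  assert (hd : 0 < / INR n) by (apply Rinv_0_lt_compat; lra).
  assert (INR k + 1 <= INR m) by (rewrite <- S_INR; apply le_INR; lia).
  assert (0 <= INR k) by apply pos_INR.
  assert (INR k / INR n >= 0) by (apply Rle_ge, Rmult_le_pos; lra).
  assert ((INR k + 1) / INR n <= INR m / INR n) by (apply Rmult_le_compat_r; lra).
  destruct hk as [hk|[e _]]; [|lia].
  destruct hm as [hm|[_ hm]]; lra.
Qed.

Lemma cov n m y : (1 <= n)%nat -> 0 < y <= INR m / INR n ->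
  exists k, (k < m)%nat /\ INR k / INR n < y <= (INR k + 1) / INR n.
Proof.
  intros hn hy.
  assert (hN : INR n > 0) by (apply lt_0_INR; lia).
  destruct (floor_lemma (y * INR n)) as [k hk]. { apply Rmult_lt_0_compat; lra. }
  exists k. split.
  - apply INR_lt. assert (y * INR n <= INR m).
    { destruct hy as [_ hy2]. apply (Rmult_le_compat_r (INR n)) in hy2; [|lra].
      replace (INR m / INR n * INR n) with (INR m) in hy2 by (field; lra). auto. }
    lra.
  - split.
    + apply (Rmult_lt_reg_r (INR n)); [lra|]. replace (INR k / INR n * INR n) with (INR k) by (field; lra). lra.
    + apply (Rmult_le_reg_r (INR n)); [lra|]. replace ((INR k + 1) / INR n * INR n) with (INR k + 1) by (field; lra). lra.
Qed.

Theorem mainTheorem5 (Om : Type) (F : (Om -> Prop) -> Prop) (P : (Om -> Prop) -> R)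
  (H : (R -> R) -> Prop) (L : (R -> R) -> R -> R -> option R) (X : Om -> R -> R) :
  sigma_algebra F -> probability F P ->
  periodic_shift_space H ->
  invariant_intrinsic_location H L ->
  periodic_stationary_process H F P X ->
  forall x, 0 <= x <= 1 ->
    P (fun w => exists y, L (X w) 0 1 = Some y /\ y <= x) = x.
Proof.
  intros hF hP hHs hInv hX x hx.
  destruct hInv as [hL [hNone hInvar]]. destruct hL as [hi [hii [hiii [_ _]]]].
  destruct hX as [hXH [_ [_ [hXcyl hstat]]]].
  destruct hHs as [_ hshift].
  set (Ev := fun (B : R -> Prop) w => exists y, L (X w) 0 1 = Some y /\ B y).
  assert (EvF : forall B, borel B -> F (Ev B)).
  { intros B hB. destruct (hi 0 1 Rlt_0_1) as [hB' _]. destruct (hB' B hB) as [A [hA hAeq]].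
    apply (S_ext F (fun w => A (X w))); [apply hXcyl; auto|].
    intro w. unfold Ev. rewrite (hAeq (X w) (hXH w)). tauto. }
  assert (Evext : forall B1 B2, (forall y, 0 <= y <= 1 -> (B1 y <-> B2 y)) ->
     P (Ev B1) = P (Ev B2)).
  { intros B1 B2 h. apply P_ext. intro w; unfold Ev; split; intros [y [hy hb]]; exists y;
    split; auto; apply (h y (hii _ 0 1 y (hXH w) Rlt_0_1 hy)); auto. }
  assert (Evtot : forall w, exists y, L (X w) 0 1 = Some y /\ 0 <= y <= 1).
  { intro w. destruct (L (X w) 0 1) as [y|] eqn:E.
    - exists y; split; auto. apply (hii _ 0 1 y (hXH w) Rlt_0_1 E).
    - exfalso. apply (hNone (X w) 0 1 (hXH w) Rlt_0_1 E). }
  assert (stat : forall B (c : R), borel B ->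
     P (fun w => exists z, L (Defs.shift c (X w)) 0 1 = Some z /\ B z) = P (Ev B)).
  { intros B c hB. destruct (hi 0 1 Rlt_0_1) as [hB' _]. destruct (hB' B hB) as [A [hA hAeq]].
    rewrite (P_ext P _ (fun w => A (Defs.shift c (X w)))).
    2:{ intro w. apply hAeq. apply hshift; auto. }
    rewrite hstat by auto. apply P_ext. intro w. unfold Ev. rewrite (hAeq (X w) (hXH w)). tauto. }
  assert (rel : forall w (c : R), exists y z j, L (X w) 0 1 = Some y /\ L (Defs.shift c (X w)) 0 1 = Some z /\
      z = y - c + IZR j /\ 0 <= y <= 1 /\ 0 <= z <= 1).
  { intros w c. destruct (hInvar (X w) c (hXH w)) as [y0 [ya [k [h0 [ha hk]]]]].
    pose proof (hiii (X w) c (c + 1) c (hXH w) ltac:(lra)) as h3.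
    replace (c - c) with 0 in h3 by ring. replace (c + 1 - c) with 1 in h3 by ring.
    rewrite ha in h3. destruct (L (Defs.shift c (X w)) 0 1) as [z|] eqn:Ez; simpl in h3; [|discriminate].
    injection h3 as h3. exists y0, z, (- k)%Z. repeat split; auto.
    - rewrite opp_IZR. lra.
    - apply (hii _ 0 1 y0 (hXH w) Rlt_0_1 h0).
    - apply (hii _ 0 1 y0 (hXH w) Rlt_0_1 h0).
    - apply (hii _ 0 1 z (hshift _ c (hXH w)) Rlt_0_1 Ez).
    - apply (hii _ 0 1 z (hshift _ c (hXH w)) Rlt_0_1 Ez). }
  assert (key : forall n k, (2 <= n)%nat -> (k < n)%nat -> P (Ev (Arc n k)) = P (Ev (Arc n 0))).
  { intros n k hn hk. rewrite <- (stat (Arc n 0) (INR k / INR n) (borel_Arc n 0)).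
    apply P_ext. intro w. destruct (rel w (INR k / INR n)) as [y [z [j [hy [hz [hzj [yb zb]]]]]]].
    unfold Ev. rewrite hy, hz. split.
    - intros [y' [e hb]]. injection e as e; subst y'. exists z; split; auto.
      apply (arc_rel n k y z j); auto.
    - intros [z' [e hb]]. injection e as e; subst z'. exists y; split; auto.
      apply (arc_rel n k y z j); auto. }
  assert (addit : forall n, (2 <= n)%nat -> forall m, (m <= n)%nat ->
     F (fun w => exists k, (k < m)%nat /\ Ev (Arc n k) w) /\
     P (fun w => exists k, (k < m)%nat /\ Ev (Arc n k) w) = INR m * P (Ev (Arc n 0))).
  { intros n hn m. induction m as [|m IH]; intro hm.
    - split.
      + apply (S_ext F (fun _ => False)); [apply S_empty; auto|]. intro; split; [tauto|].
        intros [k [hk _]]; lia.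
      + simpl. rewrite Rmult_0_l. rewrite <- (P_empty F P hF hP). apply P_ext.
        intro; split; [intros [k [hk _]]; lia | tauto].
    - destruct (IH ltac:(lia)) as [IHF IHP].
      assert (hE : forall w, (exists k, (k < S m)%nat /\ Ev (Arc n k) w) <->
         ((exists k, (k < m)%nat /\ Ev (Arc n k) w) \/ Ev (Arc n m) w)).
      { intro w; split.
        - intros [k [hk he]]. destruct (Nat.eq_dec k m); [subst; right; auto | left; exists k; split; auto; lia].
        - intros [[k [hk he]]|he]; [exists k; split; auto; lia | exists m; split; auto]. }
      split.
      + apply (S_ext F _ _ (S_union2 F _ _ hF IHF (EvF _ (borel_Arc n m)))). intro w; rewrite hE; tauto.
      + rewrite (P_ext P _ _ hE). rewrite (P_add2 F); auto.
        * rewrite IHP, (key n m) by lia. rewrite S_INR. ring.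
        * apply EvF, borel_Arc.
        * intros w [k [hk [y [e1 h1]]]] [y' [e2 h2]]. rewrite e1 in e2. injection e2 as e2; subst y'.
          exact (arc_disj n k m y hk ltac:(lia) (hii _ 0 1 y (hXH w) Rlt_0_1 e1) h1 h2). }
  assert (p_val : forall n, (2 <= n)%nat -> P (Ev (Arc n 0)) = / INR n).
  { intros n hn. destruct (addit n hn n (le_n n)) as [_ h].
    assert (hN : INR n > 0) by (apply lt_0_INR; lia).
    assert (P (fun w => exists k, (k < n)%nat /\ Ev (Arc n k) w) = 1).
    { destruct hP as [h1 _]. rewrite <- h1. apply P_ext. intro w; split; [tauto|intros _].
      destruct (Evtot w) as [y [e hy]].
      destruct (Req_dec y 0) as [y0|y0].
      - exists (n-1)%nat. split; [lia|]. exists y; split; auto. right; split; auto; lra.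
      - destruct (cov n n y ltac:(lia)) as [k [hk hk2]].
        + split; [lra|]. replace (INR n / INR n) with 1 by (field; lra). lra.
        + exists k; split; auto. exists y; split; auto. left; auto. }
    rewrite H0 in h. apply (Rmult_eq_reg_l (INR n)); [|lra]. rewrite <- h. field. lra. }
  assert (partial : forall n m, (2 <= n)%nat -> (m <= n - 1)%nat ->
     P (Ev (fun y => 0 < y <= INR m / INR n)) = INR m / INR n).
  { intros n m hn hm. destruct (addit n hn m ltac:(lia)) as [_ h].
    rewrite p_val in h by auto. etransitivity; [|exact h]. apply P_ext. intro w; split.
    - intros [y [e hy]]. destruct (cov n m y ltac:(lia) hy) as [k [hk hk2]].
      exists k; split; auto. exists y; split; auto. left; auto.
    - intros [k [hk [y [e [hy|[hy _]]]]]]; [|lia]. exists y; split; auto.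
      assert (hN : INR n > 0) by (apply lt_0_INR; lia).
      assert (INR k + 1 <= INR m) by (rewrite <- S_INR; apply le_INR; lia).
      assert (0 <= INR k) by apply pos_INR.
      assert (INR k / INR n >= 0) by (apply Rle_ge, Rmult_le_pos; [lra|left; apply Rinv_0_lt_compat; lra]).
      assert ((INR k + 1) / INR n <= INR m / INR n) by (apply Rmult_le_compat_r; [left; apply Rinv_0_lt_compat|]; lra).
      lra. }
  assert (P0 : P (Ev (fun y => -1 < y <= 0)) = 0).
  { apply zero_lemma.
    - destruct hP as [_ [h0 _]]. apply h0, EvF, borel_Ioc.
    - intros n hn. rewrite <- (p_val n hn). rewrite <- (key n (n-1)%nat hn ltac:(lia)).
      apply (P_mono F); [exact hF | exact hP | apply EvF, borel_Ioc | apply EvF, borel_Arc |].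
      intros w [y [e hy]]. exists y; split; auto. right; split; auto. }
  destruct (Req_dec x 1) as [x1|x1].
  - subst x. destruct hP as [h1 _]. etransitivity; [|exact h1]. apply P_ext. intro w; split; [tauto|intros _].
    destruct (Evtot w) as [y [e hy]]. exists y; split; [exact e | lra].
  - change (P (Ev (fun y => y <= x)) = x).
    assert (hsplit : forall w, Ev (fun y => y <= x) w <->
        (Ev (fun y => -1 < y <= 0) w \/ Ev (fun y => 0 < y <= x) w)).
    { intro w. destruct (Evtot w) as [y [e hy]]. unfold Ev. rewrite e. split.
      - intros [y' [e' h]]. injection e' as e'; subst y'.
        destruct (Rle_dec y 0); [left|right]; exists y; split; auto; lra.
      - intros [[y' [e' h]]|[y' [e' h]]]; injection e' as e'; subst y'; exists y; split; auto; lra. }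
    rewrite (P_ext P _ _ hsplit). rewrite (P_add2 F); [| exact hF | exact hP | apply EvF, borel_Ioc | apply EvF, borel_Ioc | ].
    2:{ intros w [y [e h]] [y' [e' h']]. rewrite e in e'. injection e' as e'; subst y'. lra. }
    rewrite P0, Rplus_0_l.
    destruct (Req_dec x 0) as [x0|x0].
    { subst x. rewrite <- (P_empty F P hF hP). apply P_ext. intro w; split; [intros [y [_ h]]; lra | tauto]. }
    set (Q := P (Ev (fun y => 0 < y <= x))).
    assert (hQ : forall n, (2 <= n)%nat -> Rabs (Q - x) <= / INR n).
    { intros n hn. assert (hN : INR n >= 2). { replace 2 with (INR 2) by (simpl; ring). apply Rle_ge, le_INR; lia. }
      destruct (floor_lemma (x * INR n)) as [k hk]. { apply Rmult_lt_0_compat; lra. }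
      assert (hkn : (k <= n - 1)%nat).
      { assert (INR k < INR n) by nra. apply INR_lt in H0. lia. }
      assert (hlow : INR k / INR n <= Q).
      { rewrite <- (partial n k hn hkn). apply (P_mono F); [exact hF | exact hP | apply EvF, borel_Ioc | apply EvF, borel_Ioc |].
        intros w [y [e h]]. exists y; split; auto. split; [lra|].
        assert (INR k / INR n < x).
        { apply (Rmult_lt_reg_r (INR n)); [lra|]. replace (INR k / INR n * INR n) with (INR k) by (field; lra). lra. }
        lra. }
      assert (hup : Q <= (INR k + 1) / INR n).
      { destruct (Nat.eq_dec k (n-1)) as [e|ne].
        - assert (INR k + 1 = INR n). { subst k. rewrite <- S_INR. f_equal. lia. }
          rewrite H0. replace (INR n / INR n) with 1 by (field; lra). apply (P_le1 F); auto. apply EvF, borel_Ioc.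
        - rewrite <- S_INR. rewrite <- (partial n (S k) hn ltac:(lia)).
          apply (P_mono F); [exact hF | exact hP | apply EvF, borel_Ioc | apply EvF, borel_Ioc |].
          intros w [y [e h]]. exists y; split; auto. split; [lra|].
          assert (x <= INR (S k) / INR n).
          { apply (Rmult_le_reg_r (INR n)); [lra|]. replace (INR (S k) / INR n * INR n) with (INR (S k)) by (field; lra). rewrite S_INR. lra. }
          lra. }
      assert (hx1 : INR k / INR n < x).
      { apply (Rmult_lt_reg_r (INR n)); [lra|]. replace (INR k / INR n * INR n) with (INR k) by (field; lra). lra. }
      assert (hx2 : x <= (INR k + 1) / INR n).
      { apply (Rmult_le_reg_r (INR n)); [lra|]. replace ((INR k + 1) / INR n * INR n) with (INR k + 1) by (field; lra). lra. }
      replace ((INR k + 1) / INR n) with (INR k / INR n + / INR n) in * by (field; lra).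
      apply Rabs_le. lra. }
    pose proof (zero_lemma _ (Rabs_pos _) hQ) as hz.
    destruct (Rcase_abs (Q - x)) as [hl|hl]; [rewrite Rabs_left in hz | rewrite Rabs_right in hz]; lra.
Qed.
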